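(* Let $\beta$ be any online throttling strategy (specified for every horizon $T$). For any $\mu>\rho/\bar v$, \[\liminf_{T\to\infty,\ B=\rho T}\ \inf_{\bm v,\,G}\ \frac1T\,\mathbb E_{\bm p\sim G^T,\ \bm\gamma}\Big[R^\beta(\bm v,\bm p,\bm\gamma)-\mu\cdot R^{\mathrm{H}}(\bm v,\bm p)\Big]<0,\] where the infimum is over value sequences $\bm v\in[0,\bar v]^T$ and distributions $G$ on $[0,\bar v]$.
   Context: Repeated second-price auctions with a single budget-constrained buyer. Constants $\bar v>0$ and $\rho\in(0,\bar v]$. There are $T$ rounds and total budget $B=\rho T$. In round $t$ the buyer has value $v_t\in[0,\bar v]$ (here an arbitrary, adversarially chosen sequence $\bm v=(v_t)$), and the highest competing bid $p_t$ is drawn i.i.d. from a distribution $G$ on $[0,\bar v]$ unknown to the buyer. After seeing $v_t$ the buyer chooses $x_t\in\{0,1\}$ and obtains revenue $x_tr_t$ and pays $x_tc_t$, with $r_t=(v_t-p_t)^+$, $c_t=p_t\mathbf 1[v_t\ge p_t]$. An online throttling strategy sets $x_t=\beta_t(\mathcal H_t,v_t,\gamma_t)$ with internal randomness $\gamma_t$ and history $\mathcal H_t=(v_\tau,x_\tau,p_\tau)_{\tau<t}$ (full information) or $(v_\tau,x_\tau,x_\tau p_\tau)_{\tau<t}$ (partial information); total payment must stay within $B$. With $T_0$ the last round with $x_t=1$, the total revenue is $R^\beta(\bm v,\bm p,\bm\gamma)=\sum_{t=1}^{T_0}x_tr_t$. The hindsight benchmark is $R^{\mathrm H}(\bm v,\bm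 p)=\max_{\bm x\in\{0,1\}^T}\sum_{t=1}^Tx_t(v_t-p_t)^+$ subject to $\sum_{t=1}^Tx_tp_t\mathbf 1[v_t\ge p_t]\le T\rho$. *)

(* Defs.v *)
From HB Require Import structures.
From mathcomp Require Import all_boot all_order all_algebra.
From mathcomp Require Import all_classical all_reals all_analysis.
Set Implicit Arguments. Unset Strict Implicit. Unset Printing Implicit Defensive.
Import Order.TTheory GRing.Theory Num.Theory.
Local Open Scope ring_scope.

Section Throttling.
Variable R : realType.

(* A history entry (v_tau, x_tau, p_tau): full-information feedback. *)
Definition hist_entry := (R * bool * R)%type.

(* Per-horizon strategy: [beta t H v w] = x_t, the decision in round t
   (rounds indexed 0,...,T-1), given the history H_t (rounds < t), the
   current value v_t and the internal randomness w (which encodes the whole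
   random sequence gamma). *)
Definition strategy (Omega : Type) := nat -> seq hist_entry -> R -> Omega -> bool.

Variable Omega : Type.

Fixpoint history (b : strategy Omega) (v p : nat -> R) (w : Omega) (t : nat)
  : seq hist_entry :=
  match t with
  | 0 => [::]
  | t'.+1 => let H := history b v p w t' in
             rcons H (v t', b t' H (v t') w, p t')
  end.

Definition decision (b : strategy Omega) (v p : nat -> R) (w : Omega) (t : nat)
  : bool := b t (history b v p w t) (v t) w.

Definition rev_t (v p : nat -> R) (t : nat) : R := Num.max (v t - p t) 0.
Definition cost_t (v p : nat -> R) (t : nat) : R :=
  if p t <= v t then p t else 0.

Definition payment (T : nat) (b : strategy Omega) (v p : nat -> R) (w : Omega) : R :=
  \sum_(t < T) (decision b v p w t)%:R * cost_t v p t.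

(* total revenue R^beta.  Since x_t = 0 after the last round T_0 with
   x_t = 1, the sum up to T_0 equals the sum over all T rounds. *)
Definition revenue (T : nat) (b : strategy Omega) (v p : nat -> R) (w : Omega) : R :=
  \sum_(t < T) (decision b v p w t)%:R * rev_t v p t.

Definition hindsight (T : nat) (rho : R) (v p : nat -> R) : R :=
  \big[Num.max/0]_(x : {ffun 'I_T -> bool}
        | \sum_(t < T) (x t)%:R * cost_t v p t <= T%:R * rho)
     \sum_(t < T) (x t)%:R * rev_t v p t.

End Throttling.

Local Open Scope ereal_scope.

(* Expectation over p ~ G^T (i.i.d. coordinates p_0,...,p_{T-1}), written as
   an iterated integral (equal to the product-measure integral by Fubini). *)
Fixpoint expectG (R : realType) (G : probability R R) (n : nat)
    (f : (nat -> R) -> \bar R) : \bar R :=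
  match n with
  | 0 => f (fun _ => 0%R)
  | n'.+1 => \int[G]_x expectG G n' (fun p => f (fun t => if t == n' then x else p t))
  end.

Definition gap_expectation (R : realType) (d : measure_display)
    (Omega : measurableType d) (P : probability Omega R)
    (T : nat) (b : strategy R Omega) (rho mu : R) (v : nat -> R)
    (G : probability R R) : \bar R :=
  \int[P]_w expectG G T
     (fun p => (revenue T b v p w - mu * hindsight T rho v p)%R%:E).

(* Main.v *)
Require Import Defs.
From HB Require Import structures.
From mathcomp Require Import all_boot all_order all_algebra.
From mathcomp Require Import all_classical all_reals all_analysis.
From mathcomp Require Import lra zify ring.
Import Order.TTheory GRing.Theory Num.Theory.
Local Open Scope ring_scope.
Local Open Scope classical_set_scope.
Section Gen.
Variables (R : realType) (d : measure_display) (Omega : measurableType d).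
Variable b : strategy R Omega.

Lemma history_ext (v v' p : nat -> R) w t :
  (forall s, (s < t)%N -> v s = v' s) ->
  history b v p w t = history b v' p w t.
Proof.
elim: t => [//|t IH] H /=.
rewrite IH; last by move=> s st; apply: H; exact: ltnW.
by rewrite H.
Qed.

Lemma decision_ext (v v' p : nat -> R) w t :
  (forall s, (s <= t)%N -> v s = v' s) ->
  decision b v p w t = decision b v' p w t.
Proof.
move=> H; rewrite /decision (@history_ext v v' p w t) ?H //.
by move=> s st; apply: H; exact: ltnW.
Qed.

Hypothesis hb : forall t H v, measurable_fun [set: Omega] (b t H v).

Lemma bset_meas t H x (bb : bool) : measurable [set w | b t H x w = bb].
Proof.
have mbb : measurable [set bb] by [].
have := hb t H x measurableT [set bb] mbb.
by rewrite setTI.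
Qed.

Lemma hist_meas (v p : nat -> R) t s : measurable [set w | history b v p w t = s].
Proof.
elim: t s => [|t IH] s /=.
  case: s => [|e s].
    by rewrite (_ : [set _ | _] = setT) //; apply/seteqP; split.
  by rewrite (_ : [set _ | _] = set0) //; apply/seteqP; split.
case/lastP: s => [|s e].
  rewrite (_ : [set _ | _] = set0) //; apply/seteqP; split => // w /=.
  by case: (history b v p w t).
case: e => [[a bb] c].
have [hac|hac] := boolP ((a == v t) && (c == p t)).
  case/andP: hac => /eqP -> /eqP ->.
  rewrite (_ : [set _ | _] = [set w | history b v p w t = s] `&`
      [set w | b t s (v t) w = bb]).
    by apply: measurableI; [exact: IH | exact: bset_meas].
  apply/seteqP; split => w /=.
    by move/rcons_inj => [-> ->].
  by case=> -> ->.
rewrite (_ : [set _ | _] = set0) //; apply/seteqP; split => // w /=.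
move/rcons_inj => [_ ha _ hc]; move: hac; rewrite -ha -hc.
by rewrite !eqxx.
Qed.

Lemma hist_fin (v p : nat -> R) t :
  exists Ls : seq (seq (hist_entry R)), forall w, history b v p w t \in Ls.
Proof.
elim: t => [|t [Ls HL]]; first by exists [:: [::]].
exists (flatten [seq [:: rcons s (v t, true, p t); rcons s (v t, false, p t)] | s <- Ls]).
move=> w /=; apply/flattenP.
exists [:: rcons (history b v p w t) (v t, true, p t);
           rcons (history b v p w t) (v t, false, p t)].
  by apply/mapP; exists (history b v p w t).
by case: (b t _ _ w); rewrite !inE eqxx ?orbT.
Qed.

Lemma dec_meas (v p : nat -> R) t : measurable [set w | decision b v p w t].
Proof.
have [Ls HL] := hist_fin v p t.
rewrite (_ : [set _ | _] = \big[setU/set0]_(s <- Ls)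
   ([set w | history b v p w t = s] `&` [set w | b t s (v t) w = true])).
  by apply: bigsetU_measurable => s _; apply: measurableI;
    [exact: hist_meas | exact: bset_meas].
apply/seteqP; split => w /=.
  move=> hd; rewrite -bigcup_seq; exists (history b v p w t); first exact: HL.
  by split.
rewrite -bigcup_seq => -[s /= _ [hs hbb]].
by rewrite /decision hs hbb.
Qed.


Lemma dec_mfun (v p : nat -> R) t :
  measurable_fun [set: Omega] (fun w => ((decision b v p w t)%:R : R)).
Proof.
rewrite (_ : (fun w => _) = \1_[set w | decision b v p w t]).
  exact: measurable_realfun.measurable_indic (dec_meas v p t).
apply/funext => w; rewrite indicE; congr (_%:R).
by rewrite mem_setE.
Qed.

Lemma rev_mfun T (v p : nat -> R) :
  measurable_fun [set: Omega] (fun w => revenue T b v p w).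
Proof.
rewrite /revenue; apply: measurable_sum => t.
by apply: measurable_realfun.measurable_funM; [exact: dec_mfun | exact: measurable_cst].
Qed.

Lemma gap_integrable (Pr : probability Omega R) T (v p : nat -> R) (c : R) :
  Pr.-integrable [set: Omega] (fun w => (revenue T b v p w - c)%:E).
Proof.
apply: (@measurable_bounded_integrable _ _ _ Pr
          (fun w => revenue T b v p w - c)) => //.
- by move: (probability_setT Pr) => /= ->; rewrite ltry.
- by apply: measurable_realfun.measurable_funB; [exact: rev_mfun | exact: measurable_cst].
exists (\sum_(t < T) `|rev_t v p t| + `|c|); split; first exact: num_real.
move=> M hM w _ /=; apply: le_trans (ltW hM).
apply: le_trans (ler_normB _ _) _; rewrite lerD2r /revenue.
apply: le_trans (ler_norm_sum _ _ _) _; apply: ler_sum => t _.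
rewrite normrM; apply: ler_piMl => //.
by case: (decision _ _ _ _ _); rewrite ?normr1 ?normr0.
Qed.

End Gen.

Section Dirac.
Local Open Scope ereal_scope.
Import HBNNSimple.
Lemma dirac_int0 (R : realType) (a : R) (g : R -> R) (hg : forall x, (0 <= g x)%R) :
  \int[(\d_a : probability R R)]_x (g x)%:E = (g a)%:E.
Proof.
rewrite ge0_integralTE; last by move=> x; rewrite lee_fin.
apply/eqP; rewrite eq_le; apply/andP; split.
  apply: ge_ereal_sup => _ [h hle <-].
  have := @integral_nnsfun _ _ _ (\d_a : probability R R) setT measurableT h.
  rewrite patch_setT => <-.
  rewrite integral_dirac //; last by apply/measurable_realfun.measurable_EFinP; exact: measurable_funPT.
  by rewrite diracT mul1e; exact: hle.
apply: ereal_sup_ubound => /=.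
exists (scale_nnsfun (indic_nnsfun R (measurable_set1 a)) (hg a)).
  move=> x /=; rewrite measurable_realfun.mindicE lee_fin; case: (boolP (x \in [set a])).
    by move=> /set_mem ->; rewrite mulr1.
  by move=> _; rewrite mulr0.
rewrite /scale_nnsfun /=.
rewrite sintegralrM sintegral_indic.
rewrite /= diracE mem_set // mule1.
reflexivity.
Qed.

Lemma dirac_int (R : realType) (a : R) (g : R -> R) :
  \int[(\d_a : probability R R)]_x (g x)%:E = (g a)%:E.
Proof.
rewrite integralE.
have -> : (fun x => (EFin \o g)^\+ x) = (fun x => (Num.max (g x) 0%R)%:E).
  by apply/funext => x; rewrite funeposE /= EFin_max.
have -> : (fun x => (EFin \o g)^\- x) = (fun x => (Num.max (- g x) 0%R)%:E).
  by apply/funext => x; rewrite funenegE /= EFin_max.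
rewrite !dirac_int0; try by move=> x; rewrite le_max lexx orbT.
rewrite -EFinB; congr EFin.
by rewrite !maxEle; do 2 case: leP => ?; lra.
Qed.

Lemma expectG_dirac (R : realType) (a : R) n (F : (nat -> R) -> R) :
  expectG (\d_a : probability R R) n (fun p => (F p)%:E) =
  (F (fun t => if (t < n)%N then a else 0%R))%:E.
Proof.
elim: n F => [|n IH] F /=.
  by congr (EFin (F _)); apply/funext.
under eq_integral do rewrite IH.
rewrite dirac_int; congr (EFin (F _)); apply/funext => t.
rewrite ltnS; case: (ltngtP t n) => // [->]; by rewrite eqxx.
Qed.
End Dirac.

Definition rr {R : realType} (a M : R) (j : nat) : R := a * M ^+ j.
Definition vj {R : realType} (L : nat) (p0 a M : R) (j : nat) (t : nat) : R :=
  if (t %/ L <= j)%N then p0 + rr a M (t %/ L) else 0.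
Definition pc {R : realType} (T : nat) (p0 : R) (t : nat) : R :=
  if (t < T)%N then p0 else 0.

Lemma count_phase (R : realType) (n L j : nat) : (0 < L)%N -> (j < n)%N ->
  \sum_(t < n * L) ((t %/ L == j)%N%:R : R) = L%:R.
Proof.
move=> hL hj.
rewrite -(big_mkord xpredT (fun t => ((t %/ L == j)%N%:R : R))).
rewrite (@big_cat_nat _ _ _ (j * L)) //=; last by nia.
rewrite (@big_cat_nat _ _ _ (j * L + L) (j * L)) //=; last by nia.
rewrite big_nat_cond big1 ?add0r; last first.
  move=> i /andP[/andP[_ hi] _].
  suff -> : (i %/ L == j)%N = false by [].
  apply/negbTE; rewrite neq_ltn; apply/orP; left; rewrite ltn_divLR //.
rewrite [X in _ + X]big_nat_cond [X in _ + X]big1 ?addr0; last first.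
  move=> i /andP[/andP[hi _] _].
  suff -> : (i %/ L == j)%N = false by [].
  apply/negbTE; rewrite neq_ltn; apply/orP; right.
  rewrite leq_divRL //; nia.
rewrite (eq_big_nat _ _ (F2 := fun _ => 1)).
  by rewrite sumr_const_nat; congr (_%:R); lia.
  move=> i /andP[h1 h2]; suff -> : (i %/ L == j)%N = true by [].
  apply/eqP/anti_leq; apply/andP; split.
    by rewrite -ltnS ltn_divLR //; nia.
  by rewrite leq_divRL //; nia.
by nia.
Qed.

Lemma rr_ge0 {R : realType} {a M : R} j : 0 <= a -> 0 <= M -> 0 <= rr a M j.
Proof. by move=> ha hM; rewrite /rr mulr_ge0 // exprn_ge0. Qed.

Lemma rev_vj {R : realType} L (p0 a M : R) j T t : 0 <= a -> 0 <= M -> 0 < p0 ->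
  (t < T)%N ->
  rev_t (vj L p0 a M j) (pc T p0) t =
  if (t %/ L <= j)%N then rr a M (t %/ L)%N else 0.
Proof.
move=> ha hM hp ht; rewrite /rev_t /vj /pc ht.
have := rr_ge0 (t %/ L)%N ha hM.
case: ifP => _ h; rewrite maxEle; case: leP => ?; lra.
Qed.

Lemma cost_full {R : realType} n L (p0 a M : R) t : 0 <= a -> 0 <= M -> (0 < L)%N ->
  (t < n * L)%N ->
  cost_t (vj L p0 a M n.-1) (pc (n * L) p0) t = p0.
Proof.
move=> ha hM hL ht; rewrite /cost_t /vj /pc ht.
have -> : (t %/ L <= n.-1)%N.
  have : (t %/ L < n)%N by rewrite ltn_divLR.
  by case: n ht => // n _.
have := rr_ge0 (t %/ L)%N ha hM.
by move=> h; case: ifP => // /negbT; rewrite -ltNge; lra.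
Qed.

Section InstStrat.
Variables (R : realType) (d : measure_display) (Omega : measurableType d).
Variable b : strategy R Omega.

Lemma revenue_vj n L (p0 a M : R) j w : 0 <= a -> 0 <= M -> 0 < p0 -> (0 < L)%N ->
  (j < n)%N ->
  revenue (n * L) b (vj L p0 a M j) (pc (n * L) p0) w =
  \sum_(t < n * L) (decision b (vj L p0 a M n.-1) (pc (n * L) p0) w t)%:R *
     (if (t %/ L <= j)%N then rr a M (t %/ L)%N else 0).
Proof.
move=> ha hM hp hL hj; rewrite /revenue; apply: eq_bigr => t _.
rewrite rev_vj //; case: ifP => htj; last by rewrite !mulr0.
congr (_%:R * _); rewrite (@decision_ext R d Omega b (vj L p0 a M j) (vj L p0 a M n.-1)) // => s hs; rewrite /vj.
have hsj : (s %/ L <= j)%N by apply: leq_trans htj; exact: leq_div2r.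
rewrite hsj; suff -> : (s %/ L <= n.-1)%N by [].
by apply: leq_trans hsj _; rewrite -ltnS (ltn_predK hj).
Qed.

Lemma payment_full n L (p0 a M : R) w : 0 <= a -> 0 <= M -> (0 < L)%N ->
  payment (n * L) b (vj L p0 a M n.-1) (pc (n * L) p0) w =
  p0 * \sum_(t < n * L) (decision b (vj L p0 a M n.-1) (pc (n * L) p0) w t)%:R.
Proof.
move=> ha hM hL; rewrite /payment mulr_sumr; apply: eq_bigr => t _.
by rewrite cost_full // mulrC.
Qed.

End InstStrat.

Lemma hind_lb {R : realType} n L (rho p0 a M : R) j : 0 <= a -> 0 <= M -> 0 < p0 ->
  (0 < L)%N -> (j < n)%N -> L%:R * p0 <= (n * L)%:R * rho ->
  L%:R * rr a M j <= hindsight (n * L) rho (vj L p0 a M j) (pc (n * L) p0).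
Proof.
move=> ha hM hp hL hj hB.
pose x := [ffun t : 'I_(n * L) => (t %/ L == j)%N].
have Hval : \sum_(t < n * L) (x t)%:R * rev_t (vj L p0 a M j) (pc (n * L) p0) t
    = L%:R * rr a M j.
  rewrite -(count_phase R n L j hL hj) mulr_suml; apply: eq_bigr => t _.
  rewrite ffunE rev_vj //; case: eqP => [->|]; last by rewrite !mul0r.
  by rewrite leqnn.
have Hcost : \sum_(t < n * L) (x t)%:R * cost_t (vj L p0 a M j) (pc (n * L) p0) t
    = L%:R * p0.
  rewrite -(count_phase R n L j hL hj) mulr_suml; apply: eq_bigr => t _.
  rewrite ffunE; case: eqP => [ht|]; last by rewrite !mul0r.
  rewrite /cost_t /vj /pc ht leqnn ltn_ord.
  have := rr_ge0 j ha hM; rewrite -ht => h.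
  by case: ifP => // /negbT; rewrite -ltNge; lra.
rewrite -Hval /hindsight.
apply: (@le_bigmax_cond _ _ _ _ x).
by rewrite Hcost.
Qed.

Lemma per_t {R : realType} n (a M : R) k : 0 < a -> 1 <= M -> (k < n)%N ->
  \sum_(j < n) (if (k <= j)%N then rr a M k else 0) / rr a M j <= 1 + n%:R / M.
Proof.
move=> ha hM hk.
have M0 : 0 < M by lra.
have rpos j : 0 < rr a M j by rewrite /rr mulr_gt0 // exprn_gt0.
apply: (@le_trans _ _ (\sum_(j < n) (((j : nat) == k)%:R + M^-1))).
  apply: ler_sum => j _.
  case: (ltngtP k j) => hkj.
  - rewrite add0r.
    rewrite ler_pdivrMr // mulrC ler_pdivlMr //.
    rewrite /rr -mulrA -exprSr; apply: ler_wpM2l; first lra.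
    exact: ler_weXn2l.
  - by rewrite mul0r add0r invr_ge0; lra.
  - by rewrite hkj divff ?gt_eqF // lerDl invr_ge0; lra.
rewrite big_split /= sumr_const card_ord.
rewrite (bigD1 (Ordinal hk)) //= eqxx big1 ?addr0; last first.
  move=> j hj; suff -> : (j == k :> nat) = false by [].
  apply/negbTE; apply: contra hj => /eqP hjk; apply/eqP; exact: val_inj.
have -> : (true%:R : R) = 1 by [].
by rewrite -[M^-1 *+ n]mulr_natl mulrC.
Qed.

Lemma pointwise {R : realType} {d : measure_display} {Omega : measurableType d}
  (b : strategy R Omega) n L (rho mu p0 a M : R) w :
  0 < a -> 1 <= M -> 0 < p0 -> (0 < L)%N -> 0 <= mu ->
  L%:R * p0 <= (n * L)%:R * rho ->
  payment (n * L) b (vj L p0 a M n.-1) (pc (n * L) p0) w <= (n * L)%:R * rho ->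
  \sum_(j < n) (revenue (n * L) b (vj L p0 a M j) (pc (n * L) p0) w
       - mu * hindsight (n * L) rho (vj L p0 a M j) (pc (n * L) p0)) / rr a M j
  <= (1 + n%:R / M) * ((n * L)%:R * rho / p0) - mu * (n * L)%:R.
Proof.
move=> ha hM hp hL hmu hLB hbud.
have a0 : 0 <= a by lra.
have M0 : 0 <= M by lra.
have rpos j : 0 < rr a M j by rewrite /rr mulr_gt0 // exprn_gt0 //; lra.
set D := fun t : 'I_(n * L) =>
  ((decision b (vj L p0 a M n.-1) (pc (n * L) p0) w t)%:R : R).
have D0 t : 0 <= D t by rewrite /D; case: (decision _ _ _ _ _).
have hsumD : \sum_(t < n * L) D t <= (n * L)%:R * rho / p0.
  rewrite ler_pdivlMr // mulrC; move: hbud; by rewrite payment_full.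
apply: (@le_trans _ _ (\sum_(j < n)
   (revenue (n * L) b (vj L p0 a M j) (pc (n * L) p0) w / rr a M j - mu * L%:R))).
  apply: ler_sum => j _; rewrite mulrBl lerD2l lerN2 -mulrA.
  apply: ler_wpM2l => //; rewrite ler_pdivlMr //.
  exact: hind_lb.
rewrite sumrB sumr_const card_ord.
have -> : mu * L%:R *+ n = mu * (n * L)%:R by rewrite -mulr_natr natrM; ring.
rewrite lerD2r.
apply: (@le_trans _ _ (\sum_(t < n * L) (1 + n%:R / M) * D t)); last first.
  by rewrite -mulr_sumr; apply: ler_wpM2l => //; apply: addr_ge0 => //;
    apply: divr_ge0.
rewrite (eq_bigr (fun j : 'I_n => \sum_(t < n * L)
   D t * ((if (t %/ L <= j)%N then rr a M (t %/ L)%N else 0) / rr a M j))); last first.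
  move=> j _; rewrite (@revenue_vj _ _ _ b _ _ _ _ _ _ w a0 M0 hp hL (ltn_ord j)) mulr_suml.
  by apply: eq_bigr => t _; rewrite mulrA.
rewrite exchange_big /=; apply: ler_sum => t _.
rewrite -mulr_sumr mulrC; apply: ler_wpM2r => //.
apply: per_t => //; rewrite ltn_divLR //.
Qed.

Lemma exists_bad {R : realType} {d : measure_display} {Omega : measurableType d}
  (Pr : probability Omega R) (n : nat) (g : nat -> Omega -> R) (w8 : nat -> R) (K : R) :
  (0 < n)%N -> (forall j, Pr.-integrable [set: Omega] (fun w => (g j w)%:E)) ->
  (forall w, \sum_(j < n) g j w * w8 j <= K) ->
  exists j, (j < n)%N /\ fine (\int[Pr]_w (g j w)%:E) * w8 j <= K / n%:R.
Proof.
move=> hn hint hpt.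
set E := fun j => fine (\int[Pr]_w (g j w)%:E).
have hE j : (\int[Pr]_w (g j w)%:E = (E j)%:E)%E.
  by rewrite /E fineK // integrable_fin_num.
have hint2 j : Pr.-integrable [set: Omega] (fun w => ((w8 j)%:E * (g j w)%:E)%E).
  exact: integrableZl.
have hsum : \sum_(j < n) E j * w8 j <= K.
  rewrite -lee_fin -sumEFin.
  have -> : (\sum_(j < n) (E j * w8 j)%:E =
             \sum_(j < n) \int[Pr]_w ((w8 j)%:E * (g j w)%:E))%E.
    apply: eq_bigr => j _; rewrite integralZl // hE -EFinM mulrC //.
  rewrite -(integral_sum measurableT (fun j : 'I_n => hint2 j)) //.
  apply: (@le_trans _ _ (\int[Pr]_w (K%:E))%E).
    apply: le_integral => //.
    - by apply: integrable_sum => // j _; exact: hint2.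
    - exact: (@finite_measure_integrable_cst _ _ _ Pr setT K measurableT).
    move=> w _; rewrite sumEFin lee_fin.
    by apply: le_trans (hpt w); apply: ler_sum => j _; rewrite mulrC.
  by rewrite integral_cst //= probability_setT mule1.
case: (pselect (exists j, (j < n)%N /\ E j * w8 j <= K / n%:R)) => // hno.
exfalso.
have hlt : \sum_(j < n) K / n%:R < \sum_(j < n) E j * w8 j.
  apply: ltr_sum.
    by apply/hasP; exists (Ordinal hn); rewrite ?mem_index_enum.
  move=> i _; rewrite ltNge; apply/negP => h; apply: hno; exists i; split => //.
move: hlt; rewrite sumr_const card_ord -[K / n%:R *+ n]mulr_natr divfK; last by rewrite pnatr_eq0 -lt0n.
by move/lt_le_trans => /(_ _ hsum); rewrite ltxx.
Qed.

Lemma liminf_neg {R : realType} (u : nat -> \bar R) (c : R) : 0 < c ->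
  (forall N, exists T, (N <= T)%N /\ (u T <= (-c)%:E)%E) -> (limn_einf u < 0)%E.
Proof.
move=> hc H; apply: (@le_lt_trans _ _ (-c)%:E); last by rewrite lte_fin oppr_lt0.
rewrite limn_einf_lim; apply: lime_le; first exact: is_cvg_einfs.
apply: nearW => N /=; have [T [hNT hT]] := H N.
apply: le_trans hT; apply: ereal_inf_lbound; by exists T.
Qed.

Theorem theorem2 (R : realType) (vbar rho : R)
  (hvbar : 0 < vbar) (hrho0 : 0 < rho) (hrho1 : rho <= vbar)
  (d : measure_display) (Omega : measurableType d)
  (P : nat -> probability Omega R)
  (beta : nat -> strategy R Omega)
  (* internal randomness: each decision is a measurable function of it *)
  (hmeas : forall T t H v, measurable_fun [set: Omega] (beta T t H v))
  (* budget feasibility: total payment never exceeds B = rho T *)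
  (hbudget : forall T (v p : nat -> R) w,
      (forall t, (t < T)%N -> 0 <= v t <= vbar) ->
      (forall t, (t < T)%N -> 0 <= p t <= vbar) ->
      payment T (beta T) v p w <= T%:R * rho)
  (mu : R) (hmu : rho / vbar < mu) :
  (limn_einf (fun T : nat =>
     ereal_inf [set e | exists (v : nat -> R) (G : probability R R),
        (forall t, (t < T)%N -> (0 <= v t <= vbar)%R) /\
        G [set x | (0 <= x <= vbar)%R] = 1%E /\
        e = ((T%:R)^-1)%R%:E * gap_expectation (P T) T (beta T) rho mu v G])
   < 0)%E.
Proof.
have mu0 : 0 < mu by apply: lt_trans hmu; exact: divr_gt0.
set q0 := rho / mu.
have hq0 : q0 < vbar by rewrite /q0 ltr_pdivrMr // mulrC -ltr_pdivrMr.
have q00 : 0 < q0 by exact: divr_gt0.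
set p0 := (vbar + q0) / 2.
have hp0 : 0 < p0 by rewrite /p0; lra.
have hp0v : p0 < vbar by rewrite /p0; lra.
have hq0p : q0 < p0 by rewrite /p0; lra.
set q := rho / p0.
have q0' : 0 < q by exact: divr_gt0.
have hq : q < mu.
  by rewrite /q ltr_pdivrMr // mulrC -ltr_pdivrMr.
set n := (Num.truncn (vbar / rho)).+1.
have hn : (0 < n)%N by [].
have hnr : vbar < n%:R * rho by rewrite -ltr_pdivrMr // truncnS_gt.
set eps := (mu - q) / q.
have heps : 0 < eps by apply: divr_gt0 => //; lra.
set M := 2 * n%:R / eps + 1.
have hM0 : 0 <= 2 * n%:R / eps by apply: divr_ge0 => //; lra.
have hM1 : 1 <= M by rewrite /M; lra.
have hMp : 0 < M by lra.
set kappa := mu - (1 + n%:R / M) * q.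
have hk : 0 < kappa.
  have h1 : n%:R / M < eps.
    rewrite ltr_pdivrMr // /M mulrDr mulr1 mulrCA divff ?gt_eqF // mulr1.
    have : 0 <= n%:R :> R by [].
    lra.
  have h2 : eps * q = mu - q by rewrite /eps divfK ?gt_eqF.
  rewrite /kappa; nra.
have hMn0 : 0 < M ^+ n.-1 by rewrite exprn_gt0.
set a := (vbar - p0) / M ^+ n.-1.
have ha : 0 < a by rewrite /a divr_gt0 //; lra.
have hrr k : (k <= n.-1)%N -> rr a M k <= vbar - p0.
  move=> hk'; rewrite /rr /a -mulrA.
  rewrite -[X in _ <= X]mulr1 ler_wpM2l //; first lra.
  rewrite ler_pdivrMl // mulr1; exact: ler_weXn2l.
have hrra k : a <= rr a M k.
  by rewrite /rr -[X in X <= _]mulr1 ler_wpM2l ?exprn_ege1 //; lra.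
set c := a * kappa / n%:R.
have hc : 0 < c by apply: divr_gt0; [exact: mulr_gt0 | rewrite ltr0n].
apply: (@liminf_neg R _ c hc) => N.
set L := N.+1.
have hL : (0 < L)%N by [].
exists (n * L)%N; split; first by rewrite (leq_trans (leqnSn N)) // leq_pmull.
have hLB : L%:R * p0 <= (n * L)%:R * rho.
  rewrite natrM mulrAC [X in _ <= X]mulrC ler_wpM2l //; lra.
have hv j t : (j < n)%N -> 0 <= vj L p0 a M j t <= vbar.
  move=> hj; rewrite /vj; case: ifP => htj; last by rewrite lexx; lra.
  have := hrr (t %/ L)%N; have := rr_ge0 (t %/ L)%N (ltW ha) (ltW hMp).
  have : (t %/ L <= n.-1)%N by apply: leq_trans htj _; rewrite -ltnS (ltn_predK hj).
  move=> /[swap] h0 /[swap] /[apply] h1; apply/andP; split; lra.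
have hpc t : 0 <= pc (n * L) p0 t <= vbar.
  by rewrite /pc; case: ifP => _; apply/andP; split; lra.
have hnm1 : (n.-1 < n)%N by rewrite prednK.
have hbud w := hbudget (n * L)%N (vj L p0 a M n.-1) (pc (n * L) p0) w
   (fun t _ => hv n.-1 t hnm1) (fun t _ => hpc t).
have hpt w := @pointwise _ _ _ (beta (n * L)%N) n L rho mu p0 a M w ha hM1 hp0 hL (ltW mu0) hLB (hbud w).
set K := (1 + n%:R / M) * ((n * L)%:R * rho / p0) - mu * (n * L)%:R in hpt.
pose g j w := revenue (n * L) (beta (n * L)%N) (vj L p0 a M j) (pc (n * L) p0) w
   - mu * hindsight (n * L) rho (vj L p0 a M j) (pc (n * L) p0).
have hint j : (P (n * L)%N).-integrable [set: Omega] (fun w => (g j w)%:E).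
  exact: (@gap_integrable R d Omega (beta (n * L)%N) (hmeas (n * L)%N) (P (n * L)%N)
    (n * L)%N (vj L p0 a M j) (pc (n * L) p0)
    (mu * hindsight (n * L) rho (vj L p0 a M j) (pc (n * L) p0))).
have [j [hj hE]] := @exists_bad R d Omega (P (n * L)%N) n g
   (fun j => (rr a M j)^-1) K hn hint hpt.
apply: (@le_trans _ _ (((n * L)%:R^-1)%:E * gap_expectation (P (n * L)%N) (n * L)
   (beta (n * L)%N) rho mu (vj L p0 a M j) (\d_p0 : probability R R))%E).
  apply: ereal_inf_lbound; exists (vj L p0 a M j), (\d_p0 : probability R R).
  split; first by move=> t _; exact: hv.
  split => //.
  have hin : [set x : R | 0 <= x <= vbar] p0 by rewrite /=; apply/andP; split; lra.
  by rewrite /= diracE mem_set.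
have hgap : (gap_expectation (P (n * L)%N) (n * L) (beta (n * L)%N) rho mu
    (vj L p0 a M j) (\d_p0 : probability R R) = \int[P (n * L)%N]_w (g j w)%:E)%E.
  rewrite /gap_expectation; apply: eq_integral => w _.
  exact: (@expectG_dirac R p0 (n * L) (fun p =>
    revenue (n * L) (beta (n * L)%N) (vj L p0 a M j) p w
    - mu * hindsight (n * L) rho (vj L p0 a M j) p)).
rewrite hgap.
set E := fine (\int[P (n * L)%N]_w (g j w)%:E) in hE.
have -> : (\int[P (n * L)%N]_w (g j w)%:E = E%:E)%E.
  by rewrite /E fineK // integrable_fin_num.
rewrite -EFinM lee_fin.
have hK : K = - ((n * L)%:R * kappa) by rewrite /K /kappa /q; ring.
have hT : 0 < (n * L)%:R :> R by rewrite ltr0n muln_gt0 hn.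
have hn0 : 0 < n%:R :> R by rewrite ltr0n.
set X := K / n%:R in hE.
have hX : X <= 0.
  rewrite /X hK; apply: mulr_le0_ge0; last by rewrite invr_ge0 ltW.
  by rewrite oppr_le0; apply: mulr_ge0; lra.
have hrj : 0 < rr a M j := lt_le_trans ha (hrra j).
have hE1 : E <= X * rr a M j by rewrite -ler_pdivrMr.
have hE2 : X * rr a M j <= X * a by have := hrra j; nra.
rewrite mulrC ler_pdivrMr //.
have hXa : X * a = - c * (n * L)%:R.
  rewrite /X hK /c; field; exact: lt0r_neq0.
by rewrite -hXa; apply: (le_trans hE1).
Qed.
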